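(* Let $d\ge 2$ and $n_1,\ldots,n_d\ge 1$ be integers, and let $\mathcal{T}\in\mathbb{R}^{n_1\times\cdots\times n_d}$, $\mathcal{T}\neq 0$. Let $[d]=\bigcup_{j=1}^m\alpha_j$ be the symmetric decomposition for $\mathcal{T}$. Then there exists a best rank one approximation $\mathcal{A}$ of $\mathcal{T}$ such that $\mathcal{A}$ is symmetric with respect to each $\alpha_j$, $j\in[m]$.
   Context: $[d]=\{1,\ldots,d\}$. $\mathbb{R}^{n_1\times\cdots\times n_d}=\otimes_{j=1}^d\mathbb{R}^{n_j}$ is the space of real $d$-tensors $\mathcal{T}=[t_{i_1,\ldots,i_d}]$, with inner product $\langle\mathcal{S},\mathcal{T}\rangle=\sum s_{i_1,\ldots,i_d}t_{i_1,\ldots,i_d}$ and norm $\|\mathcal{T}\|=\sqrt{\langle\mathcal{T},\mathcal{T}\rangle}$. For $\mathbf{x}_j\in\mathbb{R}^{n_j}$, $\otimes_{j=1}^d\mathbf{x}_j$ is the tensor with entries $\prod_{j=1}^d x_{i_j,j}$. $\mathrm{S}^{n-1}$ is the unit sphere in $\mathbb{R}^n$ (Euclidean norm). A best rank one approximation of $\mathcal{T}$ is a tensor $a\otimes_{j=1}^d\mathbf{u}_j$ with $a\in\mathbb{R}$, $\mathbf{u}_j\in\mathrm{S}^{n_j-1}$, attaining $\min_{s\in\mathbb{R},\,\mathbf{x}_j\in\mathrm{S}^{n_j-1}}\|\mathcal{T}-s\otimes_{j=1}^d\mathbf{x}_j\|$. For $\alpha\subseteq[d]$ with $|\alpha|\ge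 2$, a tensor is symmetric with respect to $\alpha$ if $n_p=n_q$ for all $p,q\in\alpha$ and its entry $t_{i_1,\ldots,i_d}$ is unchanged when any two indices $i_p,i_q$ with $p,q\in\alpha$ are interchanged; every tensor is by convention symmetric with respect to each singleton $\{i\}$. The symmetric decomposition of $\mathcal{T}$ is the unique partition $[d]=\bigcup_{j=1}^m\alpha_j$ into nonempty disjoint sets such that $\mathcal{T}$ is symmetric with respect to each $\alpha_j$, and for $j\neq k$, $p\in\alpha_j$, $q\in\alpha_k$, $\mathcal{T}$ is not symmetric with respect to $\{p,q\}$. *)

(* Defs.v *)
From HB Require Import structures.
From mathcomp Require Import all_boot all_order all_algebra.
From mathcomp Require Import reals.
Set Implicit Arguments. Unset Strict Implicit. Unset Printing Implicit Defensive.
Import Order.TTheory GRing.Theory Num.Theory.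
Local Open Scope ring_scope.

Definition idx (d : nat) (n : 'I_d -> nat) := {dffun forall j : 'I_d, 'I_(n j)}.

Definition tensor (R : realType) (d : nat) (n : 'I_d -> nat) := idx n -> R.

Definition tinner (R : realType) d (n : 'I_d -> nat) (S T : tensor R n) : R :=
  \sum_(i : idx n) S i * T i.

Definition tnorm (R : realType) d (n : 'I_d -> nat) (T : tensor R n) : R :=
  Num.sqrt (tinner T T).

Definition tsub (R : realType) d (n : 'I_d -> nat) (S T : tensor R n) : tensor R n :=
  fun i => S i - T i.

Definition rank1 (R : realType) d (n : 'I_d -> nat) (s : R)
  (x : forall j : 'I_d, 'I_(n j) -> R) : tensor R n :=
  fun i => s * \prod_(j < d) x j (i j).

Definition on_sphere (R : realType) m (x : 'I_m -> R) : Prop :=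
  Num.sqrt (\sum_(k < m) x k ^+ 2) = 1.

Definition best_rank1 (R : realType) d (n : 'I_d -> nat) (T A : tensor R n) : Prop :=
  exists (a : R) (u : forall j : 'I_d, 'I_(n j) -> R),
    (forall j, on_sphere (u j)) /\ A = rank1 a u /\
    forall (s : R) (x : forall j : 'I_d, 'I_(n j) -> R),
      (forall j, on_sphere (x j)) -> tnorm (tsub T A) <= tnorm (tsub T (rank1 s x)).

(* T is symmetric with respect to alpha: all n_p (p in alpha) equal, and the
   entry is unchanged when interchanging i_p and i_q for p, q in alpha.
   i' is the multi-index obtained from i by interchanging the p-th and q-th
   entries (compared as natural numbers, as n_p = n_q). For a singleton alpha
   the condition is trivially true, matching the convention. *)
Definition tsym (R : realType) d (n : 'I_d -> nat) (T : tensor R n)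
  (alpha : {set 'I_d}) : Prop :=
  forall p q, p \in alpha -> q \in alpha ->
    n p = n q /\
    forall i i' : idx n,
      (i' p : nat) = i q -> (i' q : nat) = i p ->
      (forall k, k != p -> k != q -> i' k = i k) ->
      T i' = T i.

Definition sym_decomposition (R : realType) d (n : 'I_d -> nat) (T : tensor R n)
  (P : {set {set 'I_d}}) : Prop :=
  partition P [set: 'I_d] /\
  (forall alpha, alpha \in P -> tsym T alpha) /\
  (forall alpha beta p q, alpha \in P -> beta \in P -> alpha != beta ->
     p \in alpha -> q \in beta -> ~ tsym T [set p; q]).

(* Main.v *)
Require Import Defs.
From HB Require Import structures.
From mathcomp Require Import all_boot all_order all_algebra.
From mathcomp Require Import reals.
From mathcomp Require Import all_classical all_reals.
From mathcomp Require Import topology normedtype matrix_normedtype derive.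
From mathcomp Require Import ring lra.
Set Implicit Arguments. Unset Strict Implicit. Unset Printing Implicit Defensive.
Import Order.TTheory GRing.Theory Num.Theory.
Import numFieldNormedType.Exports.
Local Open Scope ring_scope.

Section Alg.
Variable R : rcfType.
Variable m : nat.
Variable B : (nat -> R) -> (nat -> R) -> R.
Definition ip (a b : nat -> R) := \sum_(k < m) a k * b k.
Definition dlt (k : nat) : nat -> R := fun l => (l == k)%:R.
Hypothesis Hexp : forall a b, B a b = \sum_(k < m) a k * B (dlt k) b.
Hypothesis Hsym : forall a b, B a b = B b a.

Lemma BaddL a1 a2 b : B (fun k => a1 k + a2 k) b = B a1 b + B a2 b.
Proof. by rewrite !(Hexp _ b) -big_split; apply: eq_bigr => k _; rewrite mulrDl. Qed.
Lemma BscaleL s a b : B (fun k => s * a k) b = s * B a b.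
Proof. by rewrite !(Hexp _ b) mulr_sumr; apply: eq_bigr => k _; rewrite mulrA. Qed.
Lemma BaddR a b1 b2 : B a (fun k => b1 k + b2 k) = B a b1 + B a b2.
Proof. by rewrite Hsym BaddL !(Hsym a). Qed.
Lemma BscaleR s a b : B a (fun k => s * b k) = s * B a b.
Proof. by rewrite Hsym BscaleL (Hsym a). Qed.

Definition unit_v (a : nat -> R) := \sum_(k < m) a k ^+ 2 = 1.

Lemma stat u v : unit_v u -> unit_v v ->
  (forall a b, unit_v a -> unit_v b -> B a b ^+ 2 <= B u v ^+ 2) ->
  forall a, B a v = B u v * ip a u.
Proof.
move=> uu uv Hmax.
pose g k := B (dlt k) v.
have Bg a : B a v = \sum_(k < m) a k * g k by rewrite Hexp.
set c := B u v.
have cE : c = \sum_(k < m) u k * g k by rewrite /c Bg.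
pose G := \sum_(k < m) g k ^+ 2.
have G0 : 0 <= G by apply: sumr_ge0 => k _; exact: sqr_ge0.
have Gle : G <= c ^+ 2.
  have [Gz|Gnz] := eqVneq G 0; first by rewrite Gz sqr_ge0.
  have Gp : 0 < G by rewrite lt_def Gnz G0.
  set s := Num.sqrt G.
  have sp : 0 < s by rewrite sqrtr_gt0.
  have s2 : s ^+ 2 = G by rewrite sqr_sqrtr.
  pose a k := g k / s.
  have ua : unit_v a.
    rewrite /unit_v /a.
    under eq_bigr do rewrite expr_div_n.
    by rewrite -mulr_suml s2 divff.
  have := Hmax _ _ ua uv; rewrite -/c Bg /a.
  under eq_bigr do rewrite mulrAC -expr2.
  by rewrite -mulr_suml -/G -{1}s2 expr2 mulfK ?gt_eqF // -expr2 s2.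
have gE : forall k : 'I_m, g k = c * u k.
  have : \sum_(k < m) (g k - c * u k) ^+ 2 = 0.
    apply/eqP; rewrite eq_le; apply/andP; split; last first.
      by apply: sumr_ge0 => k _; exact: sqr_ge0.
    have -> : \sum_(k < m) (g k - c * u k) ^+ 2 =
       G - 2 * c * (\sum_(k < m) u k * g k) + c ^+ 2 * (\sum_(k < m) u k ^+ 2).
      rewrite /G mulr_sumr mulr_sumr -sumrB -big_split /=.
      by apply: eq_bigr => k _; ring.
    by rewrite -cE uu; lra.
  move/eqP; rewrite psumr_eq0; last by move=> k _; exact: sqr_ge0.
  move/allP => H k; have := H k (mem_index_enum _).
  by rewrite /= sqrf_eq0 subr_eq0 => /eqP.
move=> a; rewrite Bg /ip mulr_sumr; apply: eq_bigr => k _.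
by rewrite gE; ring.
Qed.


Lemma sum_widen (L : nat) (f : nat -> R) : (m <= L)%N ->
  (forall k, (m <= k)%N -> f k = 0) -> \sum_(k < L) f k = \sum_(k < m) f k.
Proof.
move=> mL f0; rewrite -(subnKC mL) big_split_ord /= [X in _ + X]big1 ?addr0 // => k _.
by apply: f0; rewrite leq_addr.
Qed.

Lemma Dform (L : nat) (S xp xq z : nat -> R) : (m <= L)%N ->
  (forall k, (m <= k)%N -> xp k = 0) -> (forall k, (m <= k)%N -> xq k = 0) ->
  (forall k, (m <= k)%N -> z k = 0) ->
  \sum_(k < L) (S k + 2 * z k) ^+ 2 - \sum_(k < L) (S k + xp k + xq k) ^+ 2 =
  4 * ip S z + 4 * ip z z - 2 * ip S (fun k => xp k + xq k)
   - ip (fun k => xp k + xq k) (fun k => xp k + xq k).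
Proof.
move=> mL hp hq hz; rewrite -sumrB (@sum_widen L (fun k => (S k + 2 * z k) ^+ 2 - (S k + xp k + xq k) ^+ 2)) //; last first.
  by move=> k mk; rewrite hp ?hq ?hz //; ring.
rewrite /ip !mulr_sumr -big_split -!sumrB /=.
by apply: eq_bigr => k _; ring.
Qed.

Lemma improve (xp xq S : nat -> R) (L : nat) : (m <= L)%N ->
  unit_v xp -> unit_v xq ->
  (forall k, (m <= k)%N -> xp k = 0) -> (forall k, (m <= k)%N -> xq k = 0) ->
  (forall a b, unit_v a -> unit_v b -> B a b ^+ 2 <= B xp xq ^+ 2) ->
  (exists k : 'I_m, xp k != xq k) ->
  exists z, [/\ forall k, (m <= k)%N -> z k = 0, unit_v z, B z z ^+ 2 = B xp xq ^+ 2 &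
    \sum_(k < L) (S k + xp k + xq k) ^+ 2 < \sum_(k < L) (S k + 2 * z k) ^+ 2].
Proof.
move=> mL up uq hp hq Hmax [k0 hk0].
set c := B xp xq.
have Hmax' : forall a b, unit_v a -> unit_v b -> B a b ^+ 2 <= B xq xp ^+ 2.
  by move=> a b ua ub; rewrite (Hsym xq xp); exact: Hmax.
have st1 := stat up uq Hmax.
have st2 := stat uq up Hmax'.
rewrite -/c in st1; rewrite (Hsym xq xp) -/c in st2.
set t := ip xp xq.
have ipC a b : ip a b = ip b a by apply: eq_bigr => k _; rewrite mulrC.
set w := fun k => xp k + xq k.
have Bww : B w w = 2 * c * t + 2 * c.
  have ipp : ip xp xp = 1 by rewrite -up; apply: eq_bigr => k _; rewrite expr2.
  have iqq : ip xq xq = 1 by rewrite -uq; apply: eq_bigr => k _; rewrite expr2.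
  rewrite /w BaddL !BaddR !st2 !st1 ?ipp ?iqq ?(ipC xq xp) -/t; ring.
have nwE : ip w w = 2 + 2 * t.
  rewrite /ip /w.
  have -> : \sum_(k < m) (xp k + xq k) * (xp k + xq k) =
     \sum_(k < m) xp k ^+ 2 + \sum_(k < m) xq k ^+ 2 + 2 * t.
    rewrite /t /ip mulr_sumr -!big_split /=; apply: eq_bigr => k _; ring.
  by rewrite up uq.
have t1 : t < 1.
  have : 0 < \sum_(k < m) (xp k - xq k) ^+ 2.
    rewrite lt_def sumr_ge0 ?andbT; last by move=> k _; exact: sqr_ge0.
    rewrite psumr_eq0; last by move=> k _; exact: sqr_ge0.
    apply/allP => /(_ k0 (mem_index_enum _)) /=.
    by rewrite sqrf_eq0 subr_eq0 (negbTE hk0).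
  have -> : \sum_(k < m) (xp k - xq k) ^+ 2 =
     \sum_(k < m) xp k ^+ 2 + \sum_(k < m) xq k ^+ 2 - 2 * t.
    rewrite /t /ip mulr_sumr -big_split -sumrB /=; apply: eq_bigr => k _; ring.
  rewrite up uq; lra.
have nw0 : 0 <= ip w w by apply: sumr_ge0 => k _; rewrite -expr2 sqr_ge0.
have [nwz|nwnz] := eqVneq (ip w w) 0.
- have w0 : forall k : 'I_m, w k = 0.
    move/eqP: (nwz); rewrite /ip psumr_eq0; last by move=> k _; rewrite -expr2 sqr_ge0.
    move/allP => H k; have := H k (mem_index_enum _).
    by rewrite /= -expr2 sqrf_eq0 => /eqP.
  have Sw0 : ip S w = 0 by rewrite /ip big1 // => k _; rewrite w0 mulr0.
  pose e : R := if 0 <= ip S xp then 1 else -1.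
  have e2 : e * e = 1 by rewrite /e; case: ifP => _; ring.
  have eS : 0 <= e * ip S xp.
    by rewrite /e; case: ifP => h; [rewrite mul1r | rewrite mulN1r oppr_ge0 ltW // ltNge h].
  exists (fun k => e * xp k); split.
  + by move=> k mk; rewrite hp // mulr0.
  + by rewrite /unit_v -up; apply: eq_bigr => k _; rewrite exprMn expr2 e2 mul1r.
  + have tE : t = -1 by move: nwE; rewrite nwz; lra.
    rewrite BscaleL BscaleR st2 -/t tE.
    transitivity ((e * e) ^+ 2 * c ^+ 2); first by ring.
    by rewrite e2; ring.
  + rewrite -subr_gt0 (@Dform L S xp xq (fun k => e * xp k)) //; last by move=> k mk; rewrite hp // mulr0.
    have -> : ip S (fun k => e * xp k) = e * ip S xp.
      by rewrite /ip mulr_sumr; apply: eq_bigr => k _; ring.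
    have -> : ip (fun k => e * xp k) (fun k => e * xp k) = 1.
      by rewrite -up; apply: eq_bigr => k _; rewrite mulrACA e2 mul1r expr2.
    rewrite -/w Sw0 nwz; lra.
- have nwp : 0 < ip w w by rewrite lt_def nwnz nw0.
  set r := Num.sqrt (ip w w).
  have rp : 0 < r by rewrite sqrtr_gt0.
  have r2 : r ^+ 2 = ip w w by rewrite sqr_sqrtr.
  have r_le2 : r <= 2.
    have : r ^+ 2 <= 2 ^+ 2 by rewrite r2 nwE; lra.
    by rewrite ler_pXn2r // ?nnegrE ltW.
  pose e : R := if 0 <= ip S w then 1 else -1.
  have e2 : e * e = 1 by rewrite /e; case: ifP => _; ring.
  have eS : 0 <= e * ip S w.
    by rewrite /e; case: ifP => h; [rewrite mul1r | rewrite mulN1r oppr_ge0 ltW // ltNge h].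
  have eS2 : ip S w <= e * ip S w.
    by rewrite /e; case: ifP => h; [rewrite mul1r | rewrite mulN1r; lra].
  pose f := e / r.
  have f2 : f * f * ip w w = 1.
    have rn : r != 0 by rewrite gt_eqF.
    by rewrite /f -r2 -[RHS]e2; field.
  exists (fun k => f * w k); split.
  + by move=> k mk; rewrite /w hp // hq // addr0 mulr0.
  + rewrite /unit_v -f2 /ip mulr_sumr; apply: eq_bigr => k _; ring.
  + rewrite BscaleL BscaleR Bww.
    have -> : f * (f * (2 * c * t + 2 * c)) = c * (f * f * ip w w) by rewrite nwE; ring.
    by rewrite f2 mulr1.
  + rewrite -subr_gt0 (@Dform L S xp xq (fun k => f * w k)) //; last by move=> k mk; rewrite /w hp // hq // addr0 mulr0.
    have -> : ip S (fun k => f * w k) = f * ip S w.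
      by rewrite /ip mulr_sumr; apply: eq_bigr => k _; ring.
    have -> : ip (fun k => f * w k) (fun k => f * w k) = 1.
      by rewrite -f2 /ip !mulr_sumr; apply: eq_bigr => k _; ring.
    rewrite -/w.
    have h4 : 2 * (e * ip S w) <= 4 * (f * ip S w).
      have h4r : 2 <= 4 / r by rewrite ler_pdivlMr //; lra.
      have -> : 4 * (f * ip S w) = (e * ip S w) * (4 / r) by rewrite /f; ring.
      by rewrite mulrC; apply: ler_wpM2l.
    rewrite nwE in nwp *; lra.
Qed.

End Alg.

Section Tens.
Variables (R : realType) (d : nat) (n : 'I_d -> nat).

Lemma prod_sum (F : forall j : 'I_d, 'I_(n j) -> R) :
  \sum_(i : idx n) \prod_(j < d) F j (i j) = \prod_(j < d) \sum_(k : 'I_(n j)) F j k.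
Proof.
pose P_ j := [ffun k : 'I_(n j) => F j k].
rewrite (reindex (@dffun_of_fprod _ (fun j => 'I_(n j)))); last first.
  by apply: onW_bij; exact: dffun_of_fprod_bij.
have -> : \sum_(t : fprod (fun j => 'I_(n j))) \prod_(j < d) F j (dffun_of_fprod t j)
   = \sum_(t : fprod (fun j => 'I_(n j))) \prod_(j in 'I_d) P_ j (t j).
  by apply: eq_bigr => t _; apply: eq_bigr => j _; rewrite !ffunE.
rewrite big_fprod /=.
rewrite -(bigA_distr_big_dep (tagged_with (fun j => 'I_(n j))) (fun i j => untag 0 (P_ i) j)).
apply: eq_bigr => j _.
rewrite [RHS](eq_bigr (fun k => P_ j k)); last by move=> k _; rewrite ffunE.
by rewrite (big_tag (fun i k => P_ i k) j).
Qed.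

Variable T : tensor R n.
Notation X := (forall j : 'I_d, 'I_(n j) -> R).

Definition fval (x : X) : R := \sum_(i : idx n) T i * \prod_(j < d) x j (i j).
Definition ext (x : X) (j : 'I_d) (k : nat) : R :=
  if (insub k : option 'I_(n j)) is Some o then x j o else 0.
Definition sqs (x : X) j := \sum_(k < n j) x j k ^+ 2.
Definition sphere (x : X) := forall j, sqs x j = 1.

Lemma ext_ord x j (o : 'I_(n j)) : ext x j o = x j o.
Proof. by rewrite /ext valK. Qed.

Lemma ext_out x j k : (n j <= k)%N -> ext x j k = 0.
Proof. by move=> h; rewrite /ext insubN // -leqNgt. Qed.

Lemma norm_expand s x : tinner (tsub T (rank1 s x)) (tsub T (rank1 s x)) =
  tinner T T - 2 * s * fval x + s ^+ 2 * \prod_(j < d) sqs x j.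
Proof.
rewrite /sqs -prod_sum /tinner /tsub /rank1 /fval.
rewrite !mulr_sumr -sumrB -big_split /=; apply: eq_bigr => i _.
by rewrite prodrXl; ring.
Qed.

Lemma on_sphereE x j : on_sphere (x j) <-> sqs x j = 1.
Proof.
rewrite /on_sphere /sqs; split => [h|->]; last exact: sqrtr1.
have h0 : 0 <= \sum_(k < n j) x j k ^+ 2 by apply: sumr_ge0 => k _; exact: sqr_ge0.
by rewrite -(sqr_sqrtr h0) h expr1n.
Qed.

Lemma best_of_max u : sphere u ->
  (forall x, sphere x -> fval x ^+ 2 <= fval u ^+ 2) -> best_rank1 T (rank1 (fval u) u).
Proof.
move=> su Hm; exists (fval u), u; split; last split => //.
  by move=> j; rewrite /on_sphere; have := su j; rewrite /sqs => ->; rewrite sqrtr1.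
move=> s x sx; rewrite /tnorm ler_sqrt; last first.
  by rewrite /tinner; apply: sumr_ge0 => i _; rewrite -expr2 sqr_ge0.
have px : \prod_(j < d) sqs x j = 1 by apply: big1 => j _; apply/on_sphereE; exact: sx.
have pu : \prod_(j < d) sqs u j = 1 by apply: big1 => j _; exact: su.
rewrite !norm_expand px pu.
have sx' : sphere x by move=> j; apply/on_sphereE; exact: sx.
have := Hm x sx'; have := sqr_ge0 (s - fval x); nra.
Qed.

Variables (p q : 'I_d).
Hypothesis pq : p != q.
Hypothesis npq : n p = n q.

Definition swapnat (i : idx n) (j : 'I_d) : nat :=
  if j == p then (i q : nat) else if j == q then (i p : nat) else (i j : nat).

Lemma swapnat_lt i j : (swapnat i j < n j)%N.
Proof.
rewrite /swapnat; case: eqP => [->|_]; first by rewrite npq.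
by case: eqP => [->|_]; [rewrite -npq|].
Qed.

Definition swapi (i : idx n) : idx n := finfun (fun j => insubd (i j) (swapnat i j)).

Lemma swapi_val i j : (swapi i j : nat) = swapnat i j.
Proof. by rewrite /swapi ffunE insubdK //; apply: swapnat_lt. Qed.

Lemma swapiK : involutive swapi.
Proof.
move=> i; apply/ffunP => j; apply: val_inj => /=; rewrite swapi_val /swapnat !swapi_val /swapnat.
rewrite eqxx eq_sym (negbTE pq) eqxx.
by case: eqP => [->|_] //; case: eqP => [->|_].
Qed.

Definition setpq (u : X) (a b : nat -> R) : X :=
  fun j k => if j == p then a k else if j == q then b k else u j k.

Definition BB (u : X) (a b : nat -> R) : R :=
  \sum_(i : idx n) a (i p) * b (i q) * (T i * \prod_(j < d | (j != p) && (j != q)) u j (i j)).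

Lemma fval_setpq u a b : fval (setpq u a b) = BB u a b.
Proof.
apply: eq_bigr => i _.
rewrite (bigD1 p) //= (bigD1 q) /=; last by rewrite eq_sym.
rewrite /setpq eqxx eq_sym (negbTE pq) eqxx.
rewrite (eq_bigr (fun j => u j (i j))); first by ring.
by move=> j /andP[/negbTE -> /negbTE ->].
Qed.

Lemma BB_exp u a b : BB u a b = \sum_(k < n p) a k * BB u (@dlt R k) b.
Proof.
rewrite /BB; under [RHS]eq_bigr do rewrite mulr_sumr.
rewrite exchange_big /=; apply: eq_bigr => i _.
rewrite (bigD1 (i p)) //= [X in _ = _ + X]big1 ?addr0.
  by rewrite /dlt eqxx mul1r !mulrA.
move=> k /negbTE; rewrite /dlt eq_sym => h.
by rewrite (_ : (nat_of_ord (i p) == k) = false) ?mul0r ?mulr0 //.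
Qed.

Hypothesis Tsym : forall i, T (swapi i) = T i.

Lemma BB_sym u a b : BB u a b = BB u b a.
Proof.
rewrite /BB (reindex_inj (can_inj swapiK)); apply: eq_bigr => i _.
rewrite Tsym !swapi_val /swapnat eqxx eq_sym (negbTE pq) eqxx.
rewrite (eq_bigr (fun j => u j (i j))); first by ring.
move=> j /andP[jp jq]; congr (u j _); apply: val_inj => /=.
by rewrite swapi_val /swapnat (negbTE jp) (negbTE jq).
Qed.

End Tens.

Arguments setpq {R d n} p q u a b j k.
Section Main.
Variables (R : realType) (d : nat) (n : 'I_d -> nat) (T : tensor R n).
Notation X := (forall j : 'I_d, 'I_(n j) -> R).

Definition Lm := (\max_(j < d) n j)%N.

Definition Vf (P : {set {set 'I_d}}) (x : X) : R :=
  \sum_(al in P) \sum_(k < Lm) (\sum_(r in al) ext x r k) ^+ 2.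

Lemma ext_setpq_other p q (u : X) (a b : nat -> R) r k : r != p -> r != q ->
  ext (setpq p q u a b) r k = ext u r k.
Proof.
move=> rp rq; rewrite /ext; case: insub => // o.
by rewrite /setpq (negbTE rp) (negbTE rq).
Qed.

Lemma ext_setpq_p p q (u : X) (a b : nat -> R) k : (forall k, (n p <= k)%N -> a k = 0) ->
  ext (setpq p q u a b) p k = a k.
Proof.
move=> a0; rewrite /ext; case: insubP => [o _ <-|].
  by rewrite /setpq eqxx.
by rewrite -leqNgt => /a0.
Qed.

Lemma ext_setpq_q p q (u : X) (a b : nat -> R) k : q != p -> (forall k, (n q <= k)%N -> b k = 0) ->
  ext (setpq p q u a b) q k = b k.
Proof.
move=> qp b0; rewrite /ext; case: insubP => [o _ <-|].
  by rewrite /setpq (negbTE qp) eqxx.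
by rewrite -leqNgt => /b0.
Qed.

Lemma sum_block (be : {set 'I_d}) p q (y : X) k : p \in be -> q \in be -> p != q ->
  \sum_(r in be) ext y r k = ext y p k + ext y q k +
     \sum_(r | (r \in be) && (r != p) && (r != q)) ext y r k.
Proof.
move=> pb qb pq; rewrite (bigD1 p) //= (bigD1 q) /=; last by rewrite qb eq_sym.
by rewrite addrA.
Qed.

Lemma setpq_sphere p q (u : X) (a b : nat -> R) : p != q -> n p = n q -> sphere u ->
  \sum_(k < n p) a k ^+ 2 = 1 -> \sum_(k < n p) b k ^+ 2 = 1 ->
  sphere (setpq p q u a b).
Proof.
move=> pq npq su ha hb j; rewrite /sqs /setpq.
case: eqP => [->|_]; first exact: ha.
case: eqP => [->|_]; first by rewrite -npq.
exact: su.
Qed.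

Lemma setpq_self p q (u : X) : p != q -> forall (j : 'I_d) (k : 'I_(n j)), setpq p q u (ext u p) (ext u q) j k = u j k.
Proof.
move=> pq j k; rewrite /setpq; case: eqP => [e|_]; first by subst j; rewrite ext_ord.
case: eqP => [e|_] //; by subst j; rewrite ext_ord.
Qed.

Lemma fval_ext (x y : X) : (forall j k, x j k = y j k) -> fval T x = fval T y.
Proof. by move=> h; apply: eq_bigr => i _; congr (_ * _); apply: eq_bigr => j _; rewrite h. Qed.

Lemma all_equal (u : X) (P : {set {set 'I_d}}) :
  sym_decomposition T P -> sphere u ->
  (forall x, sphere x -> fval T x ^+ 2 <= fval T u ^+ 2) ->
  (forall x, sphere x -> fval T x ^+ 2 = fval T u ^+ 2 -> Vf P x <= Vf P u) ->
  forall be, be \in P -> forall p q, p \in be -> q \in be ->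
  forall k, ext u p k = ext u q k.
Proof.
move=> [Hpart [Hsym _]] su Hmax HV be bP p q pb qb k.
have [npq Hs] := Hsym be bP p q pb qb.
have [pq0|pq] := eqVneq p q; first by subst q.
apply/eqP/negPn/negP => hk.
have kn : (k < n p)%N.
  by rewrite ltnNge; apply/negP => h; move: hk; rewrite !ext_out ?eqxx // -npq.
have Tsym : forall i, T (swapi p q i) = T i.
  move=> i; apply: Hs.
  - by rewrite (swapi_val npq) /swapnat eqxx.
  - by rewrite (swapi_val npq) /swapnat eq_sym (negbTE pq) eqxx.
  - move=> j jp jq; apply: val_inj => /=.
    by rewrite (swapi_val npq) /swapnat (negbTE jp) (negbTE jq).
pose S k := \sum_(r | (r \in be) && (r != p) && (r != q)) ext u r k.
have mL : (n p <= Lm)%N by rewrite /Lm (bigD1 p) //= leq_maxl.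
have up : unit_v (n p) (ext u p).
  by rewrite /unit_v -(su p) /sqs; apply: eq_bigr => j _; rewrite ext_ord.
have uq : unit_v (n p) (ext u q).
  by rewrite /unit_v npq -(su q) /sqs; apply: eq_bigr => j _; rewrite ext_ord.
have vp : forall k, (n p <= k)%N -> ext u p k = 0 by move=> k'; exact: ext_out.
have vq : forall k, (n p <= k)%N -> ext u q k = 0 by move=> k'; rewrite npq; exact: ext_out.
have BBu : BB T p q u (ext u p) (ext u q) = fval T u.
  by rewrite -fval_setpq //; apply: fval_ext => j k'; apply: setpq_self.
have Hm : forall a b, unit_v (n p) a -> unit_v (n p) b ->
    BB T p q u a b ^+ 2 <= BB T p q u (ext u p) (ext u q) ^+ 2.
  move=> a b ua ub; rewrite BBu -fval_setpq //; apply: Hmax.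
  exact: setpq_sphere.
have [z [z0 uz Bz Hlt]] := @improve R (n p) (BB T p q u)
   (fun a b => BB_exp T p q u a b) (fun a b => BB_sym pq npq Tsym u a b)
   (ext u p) (ext u q) S Lm mL up uq vp vq Hm (ex_intro _ (Ordinal kn) hk).
set x' := setpq p q u z z.
have sx' : sphere x' by apply: setpq_sphere.
have fx' : fval T x' ^+ 2 = fval T u ^+ 2 by rewrite fval_setpq // Bz BBu.
have := HV x' sx' fx'; apply/negP; rewrite -ltNge.
have hpart : forall al, al \in P -> al != be -> p \notin al /\ q \notin al.
  move: Hpart => /and3P[_ triv _] al aP ab; split; apply/negP => h.
    by move/eqP: ab; apply; rewrite -(def_pblock triv aP h) (def_pblock triv bP pb).
  by move/eqP: ab; apply; rewrite -(def_pblock triv aP h) (def_pblock triv bP qb).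
rewrite /Vf (bigD1 be) //= [X in _ < X](bigD1 be) //=.
have -> : \sum_(i in P | i != be) \sum_(k < Lm) (\sum_(r in i) ext x' r k) ^+ 2 =
          \sum_(i in P | i != be) \sum_(k < Lm) (\sum_(r in i) ext u r k) ^+ 2.
  apply: eq_bigr => al /andP[aP ab]; apply: eq_bigr => k' _; congr (_ ^+ 2).
  have [npa nqa] := hpart al aP ab.
  apply: eq_bigr => r ra; apply: ext_setpq_other.
    by apply: contraNneq npa => <-.
  by apply: contraNneq nqa => <-.
rewrite ltrD2r.
have -> : \sum_(k < Lm) (\sum_(r in be) ext u r k) ^+ 2 =
          \sum_(k < Lm) (S k + ext u p k + ext u q k) ^+ 2.
  by apply: eq_bigr => k' _; rewrite (sum_block _ _ pb qb pq) /S; congr (_ ^+ 2); ring.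
have -> : \sum_(k < Lm) (\sum_(r in be) ext x' r k) ^+ 2 =
          \sum_(k < Lm) (S k + 2 * z k) ^+ 2.
  apply: eq_bigr => k' _; rewrite (sum_block _ _ pb qb pq); congr (_ ^+ 2).
  rewrite /x' ext_setpq_p // ext_setpq_q ?(eq_sym q) // -?npq //.
  rewrite /S (eq_bigr (fun r => ext u r k')); first by ring.
  by move=> r /andP[/andP[_ rp] rq]; apply: ext_setpq_other.
exact: Hlt.
Qed.

End Main.

Local Open Scope classical_set_scope.
Local Open Scope ring_scope.

Lemma exists_max (R : realType) N (K : set 'rV[R]_N) (F : 'rV[R]_N -> R) :
  continuous F -> closed K -> (forall v, K v -> forall i, -1 <= v ord0 i <= 1) ->
  K !=set0 -> exists2 c, K c & forall t, K t -> F t <= F c.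
Proof.
move=> cF cK sub K0.
have cube := @rV_compact R N (fun _ => `[(-1 : R), 1]%classic) (fun _ => @segment_compact R (-1) 1).
have cp : compact K.
  apply: (subclosed_compact cK cube).
  by move=> v /sub Kv i /=; rewrite in_itv /=.
have [c cK' H] := compact_EVT_max K0 cp (continuous_subspaceT cF).
exists c; first by rewrite inE in cK'.
by move=> t Kt; apply: H; rewrite inE.
Qed.

Section Glue.
Variables (R : realType) (d : nat) (n : 'I_d -> nat) (T : tensor R n).
Notation X := (forall j : 'I_d, 'I_(n j) -> R).

Lemma rank1_sym (u : X) (P : {set {set 'I_d}}) a :
  sym_decomposition T P ->
  (forall be, be \in P -> forall p q, p \in be -> q \in be -> forall k, ext u p k = ext u q k) ->
  forall be, be \in P -> tsym (rank1 a u) be.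
Proof.
move=> [_ [Hs _]] Heq be bP p q pb qb.
have [npq _] := Hs be bP p q pb qb.
split => // i i' h1 h2 h3; rewrite /rank1; congr (_ * _).
have [pq0|pq] := eqVneq p q.
  subst q; suff -> : i' = i by [].
  apply/ffunP => j.
  have [jp|jp] := eqVneq j p; first by subst j; apply: val_inj.
  exact: h3.
have split2 (F : 'I_d -> R) : \prod_(j < d) F j =
    F p * (F q * \prod_(j < d | (j != p) && (j != q)) F j).
  by rewrite (bigD1 p) //= (bigD1 q) /=; last by rewrite eq_sym.
rewrite (split2 (fun j => u j (i' j))) (split2 (fun j => u j (i j))).
have e1 : u p (i' p) = u q (i q).
  by rewrite -[LHS]ext_ord h1 (Heq be bP p q pb qb) ext_ord.
have e2 : u q (i' q) = u p (i p).
  by rewrite -[LHS]ext_ord h2 (Heq be bP q p qb pb) ext_ord.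
rewrite e1 e2 (eq_bigr (fun j => u j (i j))); first by rewrite mulrCA.
by move=> j /andP[jp jq]; rewrite h3.
Qed.

Definition SG := {j : 'I_d & 'I_(n j)}.
Definition NN := #|{: SG}|.
Unset Implicit Arguments.
Definition toX (v : 'rV[R]_NN) : X :=
  fun j k => v ord0 (enum_rank (Tagged (fun j => 'I_(n j)) k)).

Set Implicit Arguments.
Definition fromX (x : X) : 'rV[R]_NN :=
  \row_i x (tag (enum_val i)) (tagged (enum_val i)).

Lemma toXK x j k : toX (fromX x) j k = x j k.
Proof. by rewrite /toX /fromX mxE enum_rankK. Qed.


Lemma contM (f g : 'rV[R]_NN -> R) : continuous f -> continuous g ->
  continuous (fun v => f v * g v).
Proof. by move=> cf cg x; exact: (continuousM (cf x) (cg x)). Qed.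

Lemma contB (f g : 'rV[R]_NN -> R) : continuous f -> continuous g ->
  continuous (fun v => f v - g v).
Proof. by move=> cf cg x; exact: (continuousB (cf x) (cg x)). Qed.

Lemma cont_sum (I : Type) (r : seq I) (Pr : pred I) (G : I -> 'rV[R]_NN -> R) :
  (forall i, continuous (G i)) -> continuous (fun v => \sum_(i <- r | Pr i) G i v).
Proof.
move=> cG; elim: r => [|i r IH].
  by under eq_fun do rewrite big_nil; exact: cst_continuous.
under eq_fun do rewrite big_cons.
case: (Pr i); last exact: IH.
by move=> x; apply: continuousD; [exact: cG | exact: IH].
Qed.

Lemma cont_prod (I : Type) (r : seq I) (Pr : pred I) (G : I -> 'rV[R]_NN -> R) :
  (forall i, continuous (G i)) -> continuous (fun v => \prod_(i <- r | Pr i) G i v).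
Proof.
move=> cG; elim: r => [|i r IH].
  by under eq_fun do rewrite big_nil; exact: cst_continuous.
under eq_fun do rewrite big_cons.
case: (Pr i); last exact: IH.
exact: contM.
Qed.

Lemma cont_toX j k : continuous (fun v => toX v j k).
Proof. exact: coord_continuous. Qed.

Lemma cont_ext r k : continuous (fun v => ext (toX v) r k).
Proof.
rewrite /ext; case: insub => [o|]; first exact: cont_toX.
exact: cst_continuous.
Qed.

Lemma cont_fval : continuous (fun v => fval T (toX v) ^+ 2).
Proof.
under eq_fun do rewrite expr2.
have h : continuous (fun v => fval T (toX v)).
  apply: cont_sum => i; apply: contM; first exact: cst_continuous.
  by apply: cont_prod => j; exact: cont_toX.
exact: contM.
Qed.

Lemma cont_Vf P : continuous (fun v => Vf P (toX v)).
Proof.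
apply: cont_sum => al; apply: cont_sum => k.
under eq_fun do rewrite expr2.
by apply: contM; apply: cont_sum => r; exact: cont_ext.
Qed.

Definition Phi (v : 'rV[R]_NN) : R := \sum_(j < d) (sqs (toX v) j - 1) ^+ 2.

Lemma cont_Phi : continuous Phi.
Proof.
apply: cont_sum => j; under eq_fun do rewrite expr2.
apply: contM; apply: contB; try exact: cst_continuous;
  by apply: cont_sum => k; under eq_fun do rewrite expr2; apply: contM; exact: cont_toX.
Qed.

Lemma PhiE v : (Phi v = 0) <-> sphere (toX v).
Proof.
split => [h j|h].
  move/eqP: h; rewrite psumr_eq0; last by move=> j' _; exact: sqr_ge0.
  move/allP => /(_ j (mem_index_enum _)) /=.
  by rewrite sqrf_eq0 subr_eq0 => /eqP.
by rewrite /Phi big1 // => j _; rewrite h subrr expr0n.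
Qed.

Lemma closedK : closed [set v | sphere (toX v)].
Proof.
have -> : [set v | sphere (toX v)] = Phi @^-1` [set x | x = 0].
  by apply/seteqP; split => v /= /PhiE.
by apply: preimage_closed; [move=> x _; exact: cont_Phi | exact: closed_eq].
Qed.

Lemma boundK v : sphere (toX v) -> forall i, -1 <= v ord0 i <= 1.
Proof.
move=> sv i; rewrite -[i]enum_valK; case: (enum_val i) => j k.
have : toX v j k ^+ 2 <= 1.
  rewrite -(sv j) /sqs (bigD1 k) //= lerDl.
  by apply: sumr_ge0 => k' _; exact: sqr_ge0.
rewrite /toX => h; apply/andP; split; nra.
Qed.

End Glue.


Theorem theorem1p1 (R : realType) (d : nat) (n : 'I_d -> nat)
  (T : tensor R n) (P : {set {set 'I_d}}) :
  (2 <= d)%N -> (forall j, (1 <= n j)%N) ->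
  T <> (fun _ => 0) ->
  sym_decomposition T P ->
  exists A : tensor R n, best_rank1 T A /\ forall alpha, alpha \in P -> tsym A alpha.
Proof.
move=> _ hn _ hdec.
pose K := [set v : 'rV[R]_(NN n) | sphere (toX R d n v)].
pose e : forall j : 'I_d, 'I_(n j) -> R := fun j k => ((k : nat) == 0%N)%:R.
have se : sphere e.
  move=> j; rewrite /sqs (bigD1 (Ordinal (hn j))) //= big1 ?addr0.
    by rewrite /e eqxx expr1n.
  by move=> k hk; rewrite /e; case: eqP => h; [case/eqP: hk; apply: val_inj|rewrite expr0n].
have sfrom : forall x, sphere x -> K (fromX x).
  by move=> x sx j; rewrite -(sx j); apply: eq_bigr => k _; rewrite toXK.
have [v0 Kv0 Hv0] := @exists_max R _ K _ (@cont_fval R d n T) (@closedK R d n) (@boundK R d n) (ex_intro _ _ (sfrom _ se)).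
pose M2 := fval T (toX R d n v0) ^+ 2.
pose K2 := [set v | K v /\ fval T (toX R d n v) ^+ 2 = M2].
have cK2 : closed K2.
  apply: closedI; first exact: closedK.
  by apply: (@preimage_closed _ _ (fun v => fval T (toX R d n v) ^+ 2) [set x | x = M2]);
    [move=> x _; exact: (@cont_fval R d n T) | exact: closed_eq].
have [v1 [Kv1 Fv1] Hv1] := @exists_max R _ K2 _ (@cont_Vf R d n P) cK2
   (fun v Kv => @boundK R d n v Kv.1) (ex_intro _ v0 (conj Kv0 erefl)).
set u := toX R d n v1.
have fX : forall x, fval T (toX R d n (fromX x)) = fval T x.
  by move=> x; apply: fval_ext => j k; rewrite toXK.
have Hmax : forall x, sphere x -> fval T x ^+ 2 <= fval T u ^+ 2.
  by move=> x sx; rewrite /u Fv1 -fX; exact: Hv0 (sfrom _ sx).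
have VX : forall x, Vf P (toX R d n (fromX x)) = Vf P x.
  move=> x; apply: eq_bigr => al _; apply: eq_bigr => k _; congr (_ ^+ 2).
  by apply: eq_bigr => r _; rewrite /ext; case: insub => // o; rewrite toXK.
have HV : forall x, sphere x -> fval T x ^+ 2 = fval T u ^+ 2 -> Vf P x <= Vf P u.
  move=> x sx fx; rewrite -VX; apply: Hv1; split; first exact: sfrom.
  by rewrite fX fx /u Fv1.
have Heq := all_equal hdec Kv1 Hmax HV.
exists (rank1 (fval T u) u); split.
  exact: best_of_max.
exact: rank1_sym hdec Heq.
Qed.
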